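(* Let $\mathcal{D} \in \mathsf{PLL}_2^\infty$ be finitely expandable. If $\mathcal{D}$ is weakly progressing then any infinite branch contains the main branch of a non-wellfounded box. Moreover, $\mathcal{D}$ is progressing if and only if $\mathcal{D}$ is weakly progressing.
   Context: Formulas: $A ::= X \mid X^\perp \mid A\otimes A \mid A ⅋ A \mid {!A} \mid {?A} \mid \mathbf{1} \mid \bot \mid \forall X.A \mid \exists X.A$. $\mathsf{PLL}_2^\infty$ is the set of possibly infinite coderivations over axiom, cut, $\otimes$, $⅋$, $\mathbf{1}$, $\bot$, weakening $?\mathsf{w}$ (from $\Gamma$ infer $\Gamma,?A$), absorption $?\mathsf{b}$ (from $\Gamma,A,?A$ infer $\Gamma,?A$), $\forall$, $\exists$ (instantiating only $(!,?)$-free formulas), and conditional promotion $\mathsf{cp}$ (from left premise $\Gamma,A$ and right premise $?\Gamma,!A$ infer $?\Gamma,!A$). A coderivation is finitely expandable if every branch contains finitely many cut and $?\mathsf{b}$ rules; weakly progressing if every infinite branch contains infinitely many right premises of $\mathsf{cp}$ rules; progressing if every infinite branch contains a $!$-thread (maximal upward sequence of $!$-formula occurrences linked by the parent relation) which is infinitely often in the conclusion of a $\mathsf{cp}$ rule. A non-wellfounded box is a coderivation whose infinite rightmost branch $\{\epsilon,2,22,\dots\}$ (its main branch) consists of conclusions of $\mathsf{cp}$ rules. *)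

(* Defs.v *)
(* Second-order parsimonious linear logic PLL_2^oo:
   formulas (de Bruijn for second-order variables), rule instances, and
   non-wellfounded coderivations represented as labelled trees indexed by
   addresses (seq nat), with explicit formula-occurrence parent pointers. *)
From HB Require Import structures.
From mathcomp Require Import all_boot.

Set Implicit Arguments.
Unset Strict Implicit.
Unset Printing Implicit Defensive.

(* Formulas.  Var n = X (de Bruijn index n), NVar n = X^perp.           *)
Inductive formula : Type :=
| Var of nat
| NVar of nat
| Tens of formula & formula
| Par of formula & formula
| Bang of formula
| Quest of formula
| One
| Bot
| All of formula        (* forall X. A, X bound as index 0 *)
| Ex of formula.

Scheme Equality for formula.
HB.instance Definition _ := hasDecEq.Build formula (compareP formula_eq_dec).

Fixpoint dual (A : formula) : formula :=
  match A with
  | Var n => NVar n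
  | NVar n => Var n
  | Tens A B => Par (dual A) (dual B)
  | Par A B => Tens (dual A) (dual B)
  | Bang A => Quest (dual A)
  | Quest A => Bang (dual A)
  | One => Bot
  | Bot => One
  | All A => Ex (dual A)
  | Ex A => All (dual A)
  end.

Fixpoint lift (c : nat) (A : formula) : formula :=
  match A with
  | Var n => Var (if c <= n then n.+1 else n)
  | NVar n => NVar (if c <= n then n.+1 else n)
  | Tens A B => Tens (lift c A) (lift c B)
  | Par A B => Par (lift c A) (lift c B)
  | Bang A => Bang (lift c A)
  | Quest A => Quest (lift c A)
  | One => One
  | Bot => Bot
  | All A => All (lift c.+1 A)
  | Ex A => Ex (lift c.+1 A)
  end.

Fixpoint subst (c : nat) (A B : formula) : formula :=
  match A with
  | Var n => if n == c then B else Var (if c < n then n.-1 else n)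
  | NVar n => if n == c then dual B else NVar (if c < n then n.-1 else n)
  | Tens A1 A2 => Tens (subst c A1 B) (subst c A2 B)
  | Par A1 A2 => Par (subst c A1 B) (subst c A2 B)
  | Bang A1 => Bang (subst c A1 B)
  | Quest A1 => Quest (subst c A1 B)
  | One => One
  | Bot => Bot
  | All A1 => All (subst c.+1 A1 (lift 0 B))
  | Ex A1 => Ex (subst c.+1 A1 (lift 0 B))
  end.

Fixpoint bq_free (A : formula) : bool :=
  match A with
  | Tens A B | Par A B => bq_free A && bq_free B
  | Bang _ | Quest _ => false
  | All A | Ex A => bq_free A
  | _ => true
  end.

Definition isBang (A : formula) : bool := if A is Bang _ then true else false.
Definition isQuest (A : formula) : bool := if A is Quest _ then true else false.
Definition unQuest (A : formula) : formula := if A is Quest B then B else A.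

(* Rule instances.  k = index (in the conclusion sequent) of the principal
   formula; m = mask saying, for each conclusion index, whether the
   occurrence goes to the left (true) or right (false) premise.          *)
Inductive rule : Type :=
| Rax of formula
| Rcut of formula & seq bool   (* cut formula A (left), A^perp (right) *)
| Rtens of nat & seq bool
| Rpar of nat
| Rone
| Rbot of nat
| Rwk of nat
| Rabs of nat
| Rall of nat
| Rex of nat & formula    (* witness B, must be (!,?)-free *)
| Rcp of nat.             (* conditional promotion *)

(* A premise is described as a list of formula occurrences, each with its
   parent pointer: Some j = its parent is occurrence j of the conclusion,
   None = no parent (cut formulas). *)
Definition occs := seq (formula * option nat).

Definition ctxm (G : seq formula) (k : nat) (P : nat -> bool) : occs :=
  [seq (nth Bot G j, Some j) | j <- iota 0 (size G) & (j != k) && P j].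

Definition ctxp (G : seq formula) (k : nat) : occs := ctxm G k (fun _ => true).

Definition all_quest_but (G : seq formula) (k : nat) : bool :=
  all (fun j => (j == k) || isQuest (nth Bot G j)) (iota 0 (size G)).

(* canonical premises of rule r with conclusion G (None: not applicable).
   Premises are listed left to right; for cp the right premise has index 1. *)
Definition canon (r : rule) (G : seq formula) : option (seq occs) :=
  match r with
  | Rax A => if perm_eq G [:: A; dual A] then Some [::] else None
  | Rcut A m =>
      Some [:: ctxm G (size G) (fun j => nth false m j) ++ [:: (A, None)];
               ctxm G (size G) (fun j => ~~ nth false m j) ++ [:: (dual A, None)]]
  | Rtens k m =>
      if k < size G then
        if nth Bot G k is Tens A B then
          Some [:: ctxm G k (fun j => nth false m j) ++ [:: (A, Some k)];
                   ctxm G k (fun j => ~~ nth false m j) ++ [:: (B, Some k)]]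
        else None
      else None
  | Rpar k =>
      if k < size G then
        if nth Bot G k is Par A B then
          Some [:: ctxp G k ++ [:: (A, Some k); (B, Some k)]]
        else None
      else None
  | Rone => if G == [:: One] then Some [::] else None
  | Rbot k =>
      if k < size G then
        if nth Bot G k is Bot then Some [:: ctxp G k] else None
      else None
  | Rwk k =>
      if k < size G then
        if nth Bot G k is Quest A then Some [:: ctxp G k] else None
      else None
  | Rabs k =>
      if k < size G then
        if nth Bot G k is Quest A then
          Some [:: ctxp G k ++ [:: (A, Some k); (Quest A, Some k)]]
        else None
      else None
  | Rall k =>
      if k < size G then
        if nth Bot G k is All A then
          Some [:: [seq (lift 0 x.1, x.2) | x <- ctxp G k] ++ [:: (A, Some k)]]
        else None
      else None
  | Rex k B =>
      if (k < size G) && bq_free B then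
        if nth Bot G k is Ex A then
          Some [:: ctxp G k ++ [:: (subst 0 A B, Some k)]]
        else None
      else None
  | Rcp k =>
      if (k < size G) && all_quest_but G k then
        if nth Bot G k is Bang A then
          Some [:: [seq (unQuest x.1, x.2) | x <- ctxp G k] ++ [:: (A, Some k)];
                   ctxp G k ++ [:: (Bang A, Some k)]]
        else None
      else None
  end.

Definition is_cp (r : rule) : bool := if r is Rcp _ then true else false.
Definition is_cut_or_abs (r : rule) : bool :=
  match r with Rcut _ _ | Rabs _ => true | _ => false end.

(* Coderivations: a node at each address (seq nat, children 0,1,...).   *)
Record node := Node { sq : occs; rl : rule }.

Definition tree := seq nat -> node.

Definition seqt (D : tree) (p : seq nat) : seq formula := map fst (sq (D p)).

Definition arity (D : tree) (p : seq nat) : nat :=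
  if canon (rl (D p)) (seqt D p) is Some ps then size ps else 0.

Inductive valid (D : tree) : seq nat -> Prop :=
| valid_root : valid D [::]
| valid_child p i : valid D p -> i < arity D p -> valid D (rcons p i).

Definition coderivation (D : tree) : Prop :=
  forall p, valid D p ->
    exists ps, canon (rl (D p)) (seqt D p) = Some ps /\
      forall i, i < size ps -> perm_eq (sq (D (rcons p i))) (nth [::] ps i).

Definition pre (b : nat -> nat) (n : nat) : seq nat := mkseq b n.

Definition inf_branch (D : tree) (b : nat -> nat) : Prop :=
  forall n, b n < arity D (pre b n).

Definition finitely_expandable (D : tree) : Prop :=
  forall b, inf_branch D b ->
    exists N, forall n, N <= n -> ~~ is_cut_or_abs (rl (D (pre b n))).

(* right premise = child index 1 *)
Definition weakly_progressing (D : tree) : Prop :=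
  forall b, inf_branch D b ->
    forall N, exists n, N <= n /\ is_cp (rl (D (pre b n))) /\ b n = 1.

Definition occ_fm (D : tree) (q : seq nat) (j : nat) : formula :=
  (nth (Bot, None) (sq (D q)) j).1.
Definition occ_par (D : tree) (q : seq nat) (j : nat) : option nat :=
  (nth (Bot, None) (sq (D q)) j).2.

(* t is a (maximal) !-thread along branch b, starting at depth m *)
Definition bang_thread (D : tree) (b : nat -> nat) (m : nat) (t : nat -> nat) : Prop :=
  (forall n, m <= n -> t n < size (sq (D (pre b n))) /\ isBang (occ_fm D (pre b n) (t n)))
  /\ (forall n, m <= n -> occ_par D (pre b n.+1) (t n.+1) = Some (t n))
  /\ (m = 0 \/ forall j, occ_par D (pre b m) (t m) = Some j ->
                         ~~ isBang (occ_fm D (pre b m.-1) j)).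

Definition progressing (D : tree) : Prop :=
  forall b, inf_branch D b ->
    exists m t, bang_thread D b m t /\
      forall N, exists n, N <= n /\ m <= n /\ rl (D (pre b n)) = Rcp (t n).

(* the subcoderivation at address p is a non-wellfounded box: its main
   branch p, p1, p11, ... consists of conclusions of cp rules *)
Definition nwf_box (D : tree) (p : seq nat) : Prop :=
  forall k, is_cp (rl (D (p ++ nseq k 1))).

Definition contains_box_main_branch (D : tree) (b : nat -> nat) : Prop :=
  exists n, nwf_box D (pre b n) /\ forall k, n <= k -> b k = 1.

(* Main.v *)
Require Import Defs.
From mathcomp Require Import all_boot zify.
From Stdlib Require Import Classical.
Set Implicit Arguments.
Unset Strict Implicit.
Unset Printing Implicit Defensive.

Fixpoint mc (A : formula) : nat :=
  match A with
  | Var _ | NVar _ | One | Bot => 0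
  | Tens A B | Par A B => mc A + mc B
  | Bang A | Quest A => (mc A).+1
  | All A | Ex A => mc A
  end.

Lemma mc_dual A : mc (dual A) = mc A.
Proof. by elim: A => //= ? -> // ? ->. Qed.

Lemma mc_lift c A : mc (Defs.lift c A) = mc A.
Proof. by elim: A c => //= [? IH1 ? IH2 | ? IH1 ? IH2 | ? IH | ? IH ] c;
  rewrite ?IH1 ?IH2 ?IH. Qed.

Lemma bq_freeE B : bq_free B = (mc B == 0).
Proof. elim: B => //= [? -> ? -> | ? -> ? ->]; by rewrite addn_eq0. Qed.

Lemma mc_subst A c B : mc B = 0 -> mc (subst c A B) = mc A.
Proof.
elim: A c B => //=.
- by move=> n c B h; case: eqP.
- by move=> n c B h; case: eqP => // _; rewrite mc_dual.
- by move=> ? IH1 ? IH2 c B h; rewrite IH1 ?IH2.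
- by move=> ? IH1 ? IH2 c B h; rewrite IH1 ?IH2.
- by move=> ? IH c B h; rewrite IH.
- by move=> ? IH c B h; rewrite IH.
- by move=> ? IH c B h; rewrite IH // mc_lift.
- by move=> ? IH c B h; rewrite IH // mc_lift.
Qed.

Definition Sm (s : occs) : nat := \sum_(x <- s) mc x.1.
Definition SG (G : seq formula) : nat := \sum_(A <- G) mc A.

Lemma Sm_cat s1 s2 : Sm (s1 ++ s2) = Sm s1 + Sm s2.
Proof. by rewrite /Sm big_cat. Qed.
Lemma Sm_cons x s : Sm (x :: s) = mc x.1 + Sm s.
Proof. by rewrite /Sm big_cons. Qed.
Lemma Sm_nil : Sm [::] = 0.
Proof. by rewrite /Sm big_nil. Qed.
Lemma Sm_fst s : Sm s = SG (map fst s).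
Proof. by rewrite /Sm /SG big_map. Qed.
Lemma Sm_lift s : Sm [seq (Defs.lift 0 x.1, x.2) | x <- s] = Sm s.
Proof. elim: s => [|x s IH] //=; by rewrite !Sm_cons IH /= mc_lift. Qed.
Lemma Sm_unQuest s : Sm [seq (unQuest x.1, x.2) | x <- s] <= Sm s.
Proof. elim: s => [|x s IH] //=; rewrite !Sm_cons /=.
apply: leq_add => //. by case: x.1 => //= ?; apply: leqnSn. Qed.

Lemma ctx_sum G k P : k < size G -> Sm (ctxm G k P) + mc (nth Bot G k) <= SG G.
Proof.
move=> hk.
rewrite /Sm /ctxm big_map big_filter /SG. have ->: \sum_(A <- G) mc A = \sum_(i <- iota 0 (size G)) mc (nth Bot G i) by rewrite -{1}(mkseq_nth Bot G) /mkseq big_map.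
rewrite (bigD1_seq k) ?mem_iota ?iota_uniq //= addnC leq_add2l big_mkcondr.
by apply: leq_sum => i _; case: (P i).
Qed.

Lemma mem_ctxm G k P x : x \in ctxm G k P ->
  exists j, [/\ x = (nth Bot G j, Some j), j != k, j < size G & P j].
Proof.
case/mapP => j; rewrite mem_filter mem_iota add0n => /andP[/andP[h1 h2] /andP[_ h3]] ->.
by exists j.
Qed.
Definition strict (r : rule) (i : nat) : nat :=
  match r with Rwk _ => 1 | Rcp _ => (i == 0) | _ => 0 end.

Lemma prem_le r G ps i : canon r G = Some ps -> i < size ps -> ~~ is_cut_or_abs r ->
  Sm (nth [::] ps i) + strict r i <= SG G.
Proof.
case: r => [A|A m|k m|k||k|k|k|k|k B|k] /=.
- by case: ifP => // _ [<-].
- by [].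
- case: ifP => // hk; case E: (nth Bot G k) => [||A B|||||||] //= [<-].
  move: (ctx_sum (fun j => nth false m j) hk) (ctx_sum (fun j => ~~ nth false m j) hk).
  rewrite E /= => h1 h2.
  case: i => [|[|i]] //= _ _; rewrite !Sm_cat !Sm_cons Sm_nil /=; lia.
- case: ifP => // hk; case E: (nth Bot G k) => [|||A B||||||] //= [<-].
  move: (ctx_sum (fun j => true) hk); rewrite E /= /ctxp => h1.
  case: i => [|i] //= _ _; rewrite !Sm_cat !Sm_cons Sm_nil /=; lia.
- by case: ifP => // _ [<-].
- case: ifP => // hk; case E: (nth Bot G k) => [|||||||||] //= [<-].
  move: (ctx_sum (fun j => true) hk); rewrite E /= /ctxp => h1.
  case: i => [|i] //= _ _; lia.
- case: ifP => // hk; case E: (nth Bot G k) => [|||||A||||] //= [<-].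
  move: (ctx_sum (fun j => true) hk); rewrite E /= /ctxp => h1.
  case: i => [|i] //= _ _; lia.
- by [].
- case: ifP => // hk; case E: (nth Bot G k) => [||||||||A|] //= [<-].
  move: (ctx_sum (fun j => true) hk); rewrite E /= /ctxp => h1.
  case: i => [|i] //= _ _; rewrite !Sm_cat !Sm_cons Sm_nil Sm_lift /=; lia.
- case: ifP => // /andP[hk hB]; case E: (nth Bot G k) => [|||||||||A] //= [<-].
  move: (ctx_sum (fun j => true) hk); rewrite E /= /ctxp => h1.
  rewrite bq_freeE in hB; move/eqP: hB => hB.
  case: i => [|i] //= _ _; rewrite !Sm_cat !Sm_cons Sm_nil mc_subst //=; lia.
- case: ifP => // /andP[hk hq]; case E: (nth Bot G k) => [||||A|||||] //= [<-].
  move: (ctx_sum (fun j => true) hk) (Sm_unQuest (ctxp G k)); rewrite E /= /ctxp => h1 h2.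
  case: i => [|[|i]] //= _ _; rewrite !Sm_cat !Sm_cons Sm_nil /=; lia.
Qed.

Lemma ctx_par G k P x k0 : x \in ctxm G k P -> x.2 = Some k0 ->
  x.1 = nth Bot G k0 /\ k0 != k.
Proof. by case/mem_ctxm => j [-> h _ _] /= [<-]. Qed.

Definition strictp (r : rule) (k0 i : nat) : nat :=
  match r with Rcp k => (k == k0) && (i == 0) | _ => false end.

Lemma prem_par r G ps i x k0 : canon r G = Some ps -> i < size ps ->
  x \in nth [::] ps i -> x.2 = Some k0 ->
  mc x.1 + strictp r k0 i <= mc (nth Bot G k0).
Proof.
case: r => [A|A m|k m|k||k|k|k|k|k B|k] /=.
- by case: ifP => // _ [<-].
- move=> [<-]; case: i => [|[|i]] //= _; rewrite mem_cat !inE.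
  + by case/orP => [/ctx_par h /h [-> _] | /eqP -> //]; rewrite addn0.
  + by case/orP => [/ctx_par h /h [-> _] | /eqP -> //]; rewrite addn0.
- case: ifP => // hk; case E: (nth Bot G k) => [||A B|||||||] //= [<-].
  case: i => [|[|i]] //= _; rewrite mem_cat !inE.
  + case/orP => [/ctx_par h /h [-> _] | /eqP -> /= [<-]]; rewrite ?E /=; lia.
  + case/orP => [/ctx_par h /h [-> _] | /eqP -> /= [<-]]; rewrite ?E /=; lia.
- case: ifP => // hk; case E: (nth Bot G k) => [|||A B||||||] //= [<-].
  case: i => [|i] //= _; rewrite mem_cat !inE.
  case/orP => [/ctx_par h /h [-> _] | /orP [] /eqP -> /= [<-]]; rewrite ?E /=; lia.
- by case: ifP => // _ [<-].
- case: ifP => // hk; case E: (nth Bot G k) => [|||||||||] //= [<-].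
  case: i => [|i] //= _.
  by move/ctx_par => h /h [-> _]; rewrite addn0.
- case: ifP => // hk; case E: (nth Bot G k) => [|||||A||||] //= [<-].
  case: i => [|i] //= _.
  by move/ctx_par => h /h [-> _]; rewrite addn0.
- case: ifP => // hk; case E: (nth Bot G k) => [|||||A||||] //= [<-].
  case: i => [|i] //= _; rewrite mem_cat !inE.
  case/orP => [/ctx_par h /h [-> _] | /orP [] /eqP -> /= [<-]]; rewrite ?E /=; lia.
- case: ifP => // hk; case E: (nth Bot G k) => [||||||||A|] //= [<-].
  case: i => [|i] //= _; rewrite mem_cat !inE.
  case/orP => [/mapP [y /ctx_par h ->] /h [-> _] | /eqP -> /= [<-]]; rewrite ?E /= ?mc_lift; lia.
- case: ifP => // /andP[hk hB]; case E: (nth Bot G k) => [|||||||||A] //= [<-].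
  rewrite bq_freeE in hB; move/eqP: hB => hB.
  case: i => [|i] //= _; rewrite mem_cat !inE.
  case/orP => [/ctx_par h /h [-> _] | /eqP -> /= [<-]]; rewrite ?E /= ?mc_subst //; lia.
- case: ifP => // /andP[hk hq]; case E: (nth Bot G k) => [||||A|||||] //= [<-].
  case: i => [|[|i]] //= _; rewrite mem_cat !inE.
  + case/orP => [/mapP [y /ctx_par h ->] /h [-> /negbTE hk0] | /eqP -> /= [<-]].
    * rewrite eq_sym hk0 /= addn0; by case: (nth Bot G k0) => //= ?; apply: leqnSn.
    * by rewrite eqxx E /= addn1.
  + case/orP => [/ctx_par h /h [-> _] | /eqP -> /= [<-]]; rewrite ?E /=; lia.
Qed.

Lemma ev_const (f : nat -> nat) N : (forall n, N <= n -> f n.+1 <= f n) ->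
  exists M, N <= M /\ forall n, M <= n -> f n.+1 = f n.
Proof.
move=> hm.
have mono: forall N', N <= N' -> forall n, N' <= n -> f n <= f N'.
  move=> N' hN' n /subnK <-; elim: (n - N') => [|d IH] //=.
  rewrite addSn; apply: leq_trans (hm _ _) IH; lia.
suff: forall v N', N <= N' -> f N' <= v -> exists M, N <= M /\ forall n, M <= n -> f n.+1 = f n.
  by move=> h; apply: (h (f N) N).
elim=> [|v IH] N' hN' hv.
- exists N'; split => // n hn.
  have := mono N' hN' n hn; have := mono N' hN' n.+1 (leqW hn); lia.
- case: (classic (exists n, N' <= n /\ f n < f N')) => [[n [hn hlt]]|hno].
  + apply: (IH n); lia.
  + have hge : forall n, N' <= n -> f N' <= f n.
      move=> n hn; case: (leqP (f N') (f n)) => // h; exfalso; apply: hno; by exists n.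
    exists N'; split => // n hn.
    have := mono N' hN' n hn; have := mono N' hN' n.+1 (leqW hn).
    have := hge n hn; have := hge n.+1 (leqW hn); lia.
Qed.

Lemma pre_S b n : pre b n.+1 = rcons (pre b n) (b n).
Proof. by rewrite /pre mkseqS. Qed.

Lemma branch_valid D b : inf_branch D b -> forall n, valid D (pre b n).
Proof.
move=> hb; elim=> [|n IH]; first exact: valid_root.
rewrite pre_S; exact: valid_child.
Qed.

Lemma branch_step D b : coderivation D -> inf_branch D b -> forall n,
  exists ps, canon (rl (D (pre b n))) (seqt D (pre b n)) = Some ps /\ b n < size ps /\
    perm_eq (sq (D (pre b n.+1))) (nth [::] ps (b n)).
Proof.
move=> hc hb n; have [ps [hca hp]] := hc _ (branch_valid hb n).
have hbn := hb n; rewrite /arity hca in hbn.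
exists ps; split => //; split => //; rewrite pre_S; exact: hp.
Qed.

Lemma meas_step D b n : coderivation D -> inf_branch D b ->
  ~~ is_cut_or_abs (rl (D (pre b n))) ->
  Sm (sq (D (pre b n.+1))) + strict (rl (D (pre b n))) (b n) <= Sm (sq (D (pre b n))).
Proof.
move=> hc hb hnc; have [ps [hca [hsz hp]]] := branch_step hc hb n.
rewrite /Sm (perm_big _ hp) -/(Sm _) Sm_fst -/(seqt D _).
exact: prem_le hca hsz hnc.
Qed.

Lemma nth_fst (s : occs) j : (nth (Bot, None) s j).1 = nth Bot (map fst s) j.
Proof. by elim: s j => [|x s IH] [|j] //=. Qed.

Lemma isBang_size D q j : isBang (occ_fm D q j) -> j < size (sq (D q)).
Proof.
rewrite /occ_fm; case: (ltnP j (size (sq (D q)))) => // h.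
by rewrite nth_default.
Qed.

Lemma thread_step D b n k0 j1 : coderivation D -> inf_branch D b ->
  j1 < size (sq (D (pre b n.+1))) -> occ_par D (pre b n.+1) j1 = Some k0 ->
  mc (occ_fm D (pre b n.+1) j1) + strictp (rl (D (pre b n))) k0 (b n)
    <= mc (occ_fm D (pre b n) k0).
Proof.
move=> hc hb hj hpar; have [ps [hca [hsz hp]]] := branch_step hc hb n.
have hx : nth (Bot, None) (sq (D (pre b n.+1))) j1 \in nth [::] ps (b n).
  by rewrite -(perm_mem hp) mem_nth.
have := prem_par hca hsz hx hpar.
by rewrite /occ_fm /seqt !nth_fst.
Qed.

Lemma cp_canon k G ps : canon (Rcp k) G = Some ps -> exists A,
  [/\ k < size G, all_quest_but G k, nth Bot G k = Bang A &
   ps = [:: [seq (unQuest x.1, x.2) | x <- ctxp G k] ++ [:: (A, Some k)];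
            ctxp G k ++ [:: (Bang A, Some k)]]].
Proof.
rewrite /=; case: ifP => // /andP[hk hq].
case E: (nth Bot G k) => [||||A|||||] //= [<-]; by exists A.
Qed.

Lemma cp_right_shape G k ps x : canon (Rcp k) G = Some ps -> x \in nth [::] ps 1 ->
  (isQuest x.1 /\ x.2 <> Some k) \/ (x.2 = Some k /\ isBang x.1).
Proof.
case/cp_canon => A [hk hq E ->] /=; rewrite mem_cat !inE.
case/orP => [/mem_ctxm [j [-> hjk hj _]] | /eqP -> ]; last by right.
left; split => /=; last by move=> [] /eqP; rewrite (negbTE hjk).
move/allP: hq => /(_ j); rewrite mem_iota add0n hj (negbTE hjk) /=; exact.
Qed.

Lemma QB_rule r G ps : (forall A, A \in G -> isQuest A || isBang A) ->
  canon r G = Some ps -> 0 < size ps -> ~~ is_cut_or_abs r ->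
  (exists k, r = Rwk k) \/ (exists k, r = Rcp k).
Proof.
move=> hG; case: r => [A|A m|k m|k||k|k|k|k|k B|k] /=.
- by case: ifP => // _ [<-].
- by [].
- case: ifP => // hk; case E: (nth Bot G k) => [||A B|||||||] //= _.
  by have := hG _ (mem_nth Bot hk); rewrite E.
- case: ifP => // hk; case E: (nth Bot G k) => [|||A B||||||] //= _.
  by have := hG _ (mem_nth Bot hk); rewrite E.
- by case: ifP => // _ [<-].
- case: ifP => // hk; case E: (nth Bot G k) => [|||||||||] //= _.
  by have := hG _ (mem_nth Bot hk); rewrite E.
- by left; exists k.
- by [].
- case: ifP => // hk; case E: (nth Bot G k) => [||||||||A|] //= _.
  by have := hG _ (mem_nth Bot hk); rewrite E.
- case: ifP => // /andP[hk _]; case E: (nth Bot G k) => [|||||||||A] //= _.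
  by have := hG _ (mem_nth Bot hk); rewrite E.
- by right; exists k.
Qed.

Lemma part1 D : coderivation D -> finitely_expandable D -> weakly_progressing D ->
  forall b, inf_branch D b -> exists n0, forall k, n0 <= k ->
    is_cp (rl (D (pre b k))) /\ b k = 1.
Proof.
move=> hc hfe hwp b hb.
have [N hN] := hfe b hb.
have [M [hNM hM]] := @ev_const (fun n => Sm (sq (D (pre b n)))) N
  (fun n hn => leq_trans (leq_addr _ _) (meas_step hc hb (hN n hn))).
have key : forall k, M <= k -> is_cp (rl (D (pre b k))) ->
    b k = 1 /\ is_cp (rl (D (pre b k.+1))).
  move=> k hk hcp.
  have hs := meas_step hc hb (hN k (leq_trans hNM hk)).
  rewrite hM // in hs.
  have [ps [hca [hsz hp]]] := branch_step hc hb k.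
  move: hcp hs hca; case: (rl (D (pre b k))) => // j _ hs hca.
  have hca' := hca; case/cp_canon: hca' => A [_ _ _ Eps].
  rewrite Eps /= in hsz.
  have hb1 : b k = 1.
    move: hs hsz; rewrite /=; case: (b k) => [|[|?]] //=; lia.
  split => //.
  have [ps' [hca2 [hsz2 _]]] := branch_step hc hb k.+1.
  have hQB : forall A, A \in seqt D (pre b k.+1) -> isQuest A || isBang A.
    move=> B /mapP [x hx ->].
    have hx' : x \in nth [::] ps 1 by rewrite -hb1 -(perm_mem hp).
    by case: (cp_right_shape hca hx') => [[-> _] | [_ ->]]; rewrite ?orbT.
  have hk1 : M <= k.+1 by apply: leqW.
  have hnc := hN k.+1 (leq_trans hNM hk1).
  case: (QB_rule hQB hca2 (leq_ltn_trans (leq0n _) hsz2) hnc) => [[j' Ej']|[j' ->]] //.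
  have := meas_step hc hb hnc; rewrite hM // Ej' /=; lia.
have [n0 [hn0 [hcp0 _]]] := hwp b hb M.
exists n0 => k hk.
have: is_cp (rl (D (pre b k))).
  move/subnK: hk => <-; elim: (k - n0) => [|d IH] //=.
  by case: (key (d + n0) (leq_trans hn0 (leq_addl _ _)) IH).
move=> hcp; split => //; case: (key k _ hcp) => //; exact: leq_trans hn0 hk.
Qed.

Lemma rcons_nseq d (x : nat) : rcons (nseq d x) x = nseq d.+1 x.
Proof. by elim: d => //= d ->. Qed.

Lemma pre_nseq b n0 : (forall k, n0 <= k -> b k = 1) ->
  forall d, pre b n0 ++ nseq d 1 = pre b (n0 + d).
Proof.
move=> h; elim=> [|d IH]; first by rewrite cats0 addn0.
by rewrite addnS pre_S -IH h ?leq_addr // rcons_cat rcons_nseq.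
Qed.

Lemma back D b : forall m j, isBang (occ_fm D (pre b m) j) -> exists m0 (u : nat -> nat),
  [/\ m0 <= m, u m = j,
      (forall n, m0 <= n -> n <= m -> isBang (occ_fm D (pre b n) (u n))),
      (forall n, m0 <= n -> n < m -> occ_par D (pre b n.+1) (u n.+1) = Some (u n)) &
      (m0 = 0 \/ forall j', occ_par D (pre b m0) (u m0) = Some j' ->
                          ~~ isBang (occ_fm D (pre b m0.-1) j'))].
Proof.
elim=> [|m IH] j hj.
- exists 0, (fun _ => j); split => //; last by left.
  by move=> n _; rewrite leqn0 => /eqP ->.
- case E: (occ_par D (pre b m.+1) j) => [j'|]; last first.
    exists m.+1, (fun _ => j); split => //.
    + by move=> n h1 h2; have -> : n = m.+1 by apply/eqP; rewrite eqn_leq h1 h2.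
    + by move=> n h1 h2; exfalso; lia.
    + by right => j'; rewrite E.
  case hB: (isBang (occ_fm D (pre b m) j')); last first.
    exists m.+1, (fun _ => j); split => //.
    + by move=> n h1 h2; have -> : n = m.+1 by apply/eqP; rewrite eqn_leq h1 h2.
    + by move=> n h1 h2; exfalso; lia.
    + by right => j'' /=; rewrite E => [[<-]]; rewrite hB.
  have [m0 [u [h1 h2 h3 h4 h5]]] := IH j' hB.
  exists m0, (fun n => if n == m.+1 then j else u n); split.
  + exact: leqW.
  + by rewrite eqxx.
  + move=> n hn1 hn2 /=; case: eqP => [->|hne] //; apply: h3 => //; lia.
  + move=> n hn1 hn2 /=; case: eqP => [[en]|hne].
    * subst n; rewrite E -h2; have -> : (m == m.+1) = false by apply/negbTE; lia.
      by [].
    * have hnm : n < m by lia.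
      rewrite h4 //; have -> : (n == m.+1) = false by apply/negbTE; lia.
      by [].
  + have -> : (m0 == m.+1) = false by apply/negbTE; lia.
    exact: h5.
Qed.

Lemma prog_wp D : coderivation D -> progressing D -> weakly_progressing D.
Proof.
move=> hc hp b hb N.
have [m [t [[th1 [th2 _]] hinf]]] := hp b hb.
have [M [hmM hM]] := @ev_const (fun n => mc (occ_fm D (pre b n) (t n))) m
  (fun n hn => leq_trans (leq_addr _ _)
     (thread_step hc hb (proj1 (th1 n.+1 (leqW hn))) (th2 n hn))).
have [n [hn1 [hn2 hr]]] := hinf (maxn N M).
exists n; split; first by apply: leq_trans hn1; apply: leq_maxl.
rewrite hr; split => //.
have hMn : M <= n by apply: leq_trans hn1; apply: leq_maxr.
have hs := thread_step hc hb (proj1 (th1 n.+1 (leqW hn2))) (th2 n hn2).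
rewrite hM // hr /= eqxx /= in hs.
have [ps [hca [hsz _]]] := branch_step hc hb n.
rewrite hr in hca; case/cp_canon: hca => A [_ _ _ Eps]; rewrite Eps /= in hsz.
move: hs hsz; case: (b n) => [|[|?]] //=; lia.
Qed.

Lemma wp_prog D : coderivation D -> finitely_expandable D -> weakly_progressing D ->
  progressing D.
Proof.
move=> hc hfe hwp b hb.
have [n0 hn0] := part1 hc hfe hwp hb.
pose t k := if rl (D (pre b k)) is Rcp j then j else 0.
have hrl : forall k, n0 <= k -> rl (D (pre b k)) = Rcp (t k).
  move=> k hk; have [] := hn0 k hk; rewrite /t; by case: (rl (D (pre b k))).
have hbang : forall k, n0 <= k -> isBang (occ_fm D (pre b k) (t k)).
  move=> k hk; have [ps [hca _]] := branch_step hc hb k.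
  rewrite hrl // in hca; case/cp_canon: hca => A [_ _ E _].
  by rewrite /occ_fm nth_fst -/(seqt D _) E.
have hlink : forall k, n0 <= k -> occ_par D (pre b k.+1) (t k.+1) = Some (t k).
  move=> k hk; have [ps [hca [_ hp]]] := branch_step hc hb k.
  rewrite hrl // in hca.
  have hsz := isBang_size (hbang k.+1 (leqW hk)).
  have hx : nth (Bot, None) (sq (D (pre b k.+1))) (t k.+1) \in nth [::] ps 1.
    by rewrite -(proj2 (hn0 k hk)) -(perm_mem hp) mem_nth.
  case: (cp_right_shape hca hx) => [[hq _]|[h _]]; last by rewrite /occ_par.
  have := hbang k.+1 (leqW hk); rewrite /occ_fm.
  move: hq; set y := (nth (Bot, None) (sq (D (pre b k.+1))) (t k.+1)).1.
  by case: y.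
have [m0 [u [h1 h2 h3 h4 h5]]] := back (hbang n0 (leqnn n0)).
pose t' n := if n < n0 then u n else t n.
have ht'm0 : t' m0 = u m0.
  rewrite /t'; case: ltnP => // h; have -> : m0 = n0 by apply/eqP; rewrite eqn_leq h1 h.
  by rewrite h2.
exists m0, t'; split; last first.
  move=> N; exists (maxn N n0); split; first exact: leq_maxl.
  split; first by apply: leq_trans h1 _; apply: leq_maxr.
  rewrite /t' ltnNge leq_maxr /=; apply: hrl; exact: leq_maxr.
split; [|split].
- move=> n hn; suff hB : isBang (occ_fm D (pre b n) (t' n)) by split => //; apply: isBang_size.
  rewrite /t'; case: ltnP => h; [apply: h3 => //; exact: ltnW | exact: hbang].
- move=> n hn; rewrite /t' /=.
  case: (ltnP n.+1 n0) => h.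
  + rewrite (ltnW h); apply: h4 => //; exact: ltnW.
  + case: (ltnP n n0) => h'.
    * have en : n.+1 = n0 by apply/eqP; rewrite eqn_leq h h'.
      by have := h4 n hn h'; rewrite en h2.
    * exact: hlink.
- case: h5 => [->|h]; [by left | right]; by rewrite ht'm0.
Qed.

Unset Implicit Arguments.
Theorem mainTheorem7 (D : tree) :
  coderivation D -> finitely_expandable D ->
  (weakly_progressing D -> forall b, inf_branch D b -> contains_box_main_branch D b)
  /\ (progressing D <-> weakly_progressing D).
Proof.
move=> hc hfe; split; last by split; [exact: prog_wp | exact: wp_prog].
move=> hwp b hb; have [n0 hn0] := part1 hc hfe hwp hb.
exists n0; split; last by move=> k hk; case: (hn0 k hk).
move=> d; rewrite pre_nseq; last by move=> k hk; case: (hn0 k hk).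
by case: (hn0 (n0 + d) (leq_addr _ _)).
Qed.
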